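(* Let $\delta$ be a positive integer and let $a_{\delta,i}$ be the coefficient of $x^i$ in $$p_\delta(x)=\left(\frac{1+\sqrt{1-4x}}{2}\right)^{\delta+1}+\left(\frac{1-\sqrt{1-4x}}{2}\right)^{\delta+1}$$ (so $a_{\delta,0}=1$). For $j\ge1$ let $\omega_j=\zeta(2j,\delta)$ (alternatively $\omega_j=\zeta(2j-1,\delta)$; the claim holds for either choice). Then for every integer $r$ with $1\le r\le\delta$, setting $\omega_0=\frac{r}{\delta+1}$, $$\sum_{0\le i\le r}\omega_{r-i}\,a_{\delta,i}=0.$$
   Context: For positive integers $m$ and $\delta$, a $\delta$-deviation set of size $m$ is a finite sequence $(\alpha_1,\dots,\alpha_\ell)$ of positive integers such that (i) $\sum_i\alpha_i=m$; (ii) $\big|\sum_i\alpha_{2i-1}-\sum_i\alpha_{2i}\big|\le 1$; (iii) $\big|\sum_{1\le i\le j}(-1)^{i-1}\alpha_i\big|\le\delta$ for every $j\ge1$; and $\zeta(m,\delta)$ is the number of $\delta$-deviation sets of size $m$. *)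

(* Defs.v *)
From HB Require Import structures.
From mathcomp Require Import all_boot all_order all_algebra.
Set Implicit Arguments. Unset Strict Implicit. Unset Printing Implicit Defensive.
Import Order.TTheory GRing.Theory Num.Theory.
Local Open Scope ring_scope.

(* Alternating partial sum  sum_{1<=i<=j} (-1)^(i-1) alpha_i  of the first j
   terms of s (0-indexed: s`_0 = alpha_1 carries sign +). *)
Definition alt_partial (s : seq nat) (j : nat) : int :=
  \sum_(i < j) (-1) ^+ i * (nth 0%N s i)%:Z.

Definition is_dev_set (m delta : nat) (s : seq nat) : bool :=
  [&& all (fun a => 0 < a)%N s,
      sumn s == m,
      (* |sum_i alpha_{2i-1} - sum_i alpha_{2i}| <= 1 ; 1-indexed odd = 0-indexed even *)
      `| (\sum_(i < size s | ~~ odd i) (nth 0%N s i)%:Z)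
         - (\sum_(i < size s | odd i) (nth 0%N s i)%:Z) | <= 1 &
      (* for every j >= 1 (beyond size s the partial sum is constant) *)
      [forall j : 'I_(size s), `| alt_partial s j.+1 | <= delta%:Z ] ].

(* Such a sequence
   has length <= m and entries <= m, so we count, for each length k <= m,
   the k-tuples with entries in 'I_(m.+1) forming a deviation set. *)
Definition zeta (m delta : nat) : nat :=
  (\sum_(k < m.+1)
     #|[set t : k.-tuple 'I_(m.+1) | is_dev_set m delta (map val t)]|)%N.

(* p_delta(x) = ((1+s)/2)^(d+1) + ((1-s)/2)^(d+1) with s = sqrt(1-4x).
   Binomial expansion: the odd powers of s cancel, so
   p_delta = 2^(-d) * sum_k C(d+1, 2k) (1-4x)^k, a polynomial in x. *)
Definition pdelta (d : nat) : {poly rat} :=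
  (2%:R ^- d) *: \sum_(k < d.+2) ('C(d.+1, k.*2))%:R *: (1 - 4%:R *: 'X) ^+ k.

Definition acoef (d i : nat) : rat := (pdelta d)`_i.

(* Main.v *)
Require Import Defs.
From HB Require Import structures.
From mathcomp Require Import all_boot all_order all_algebra.
Import Order.TTheory GRing.Theory Num.Theory.
Local Open Scope ring_scope.
From mathcomp Require Import ring zify.

Definition eqm (K : nat) (p q : {poly rat}) := forall i, (i < K)%N -> p`_i = q`_i.

Lemma eqm_refl {K p} : eqm K p p. Proof. by []. Qed.
Lemma eqm_sym {K p q} : eqm K p q -> eqm K q p. Proof. by move=> h i hi; rewrite h. Qed.
Lemma eqm_trans {K p q r} : eqm K p q -> eqm K q r -> eqm K p r.
Proof. by move=> h1 h2 i hi; rewrite h1 // h2. Qed.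
Lemma eqm_le {K K' p q} : (K' <= K)%N -> eqm K p q -> eqm K' p q.
Proof. by move=> hK h i hi; apply: h; apply: leq_trans hK. Qed.
Lemma eqm_eq {K p q} : p = q -> eqm K p q. Proof. by move=> ->. Qed.
Lemma eqmD {K p q p' q'} : eqm K p q -> eqm K p' q' -> eqm K (p + p') (q + q').
Proof. by move=> h h' i hi; rewrite !coefD h // h'. Qed.
Lemma eqmN {K p q} : eqm K p q -> eqm K (- p) (- q).
Proof. by move=> h i hi; rewrite !coefN h. Qed.
Lemma eqmB {K p q p' q'} : eqm K p q -> eqm K p' q' -> eqm K (p - p') (q - q').
Proof. by move=> h h'; apply: eqmD => //; apply: eqmN. Qed.
Lemma eqmZ {K c p q} : eqm K p q -> eqm K (c *: p) (c *: q).
Proof. by move=> h i hi; rewrite !coefZ h. Qed.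
Lemma eqmMn {K p q n} : eqm K p q -> eqm K (p *+ n) (q *+ n).
Proof. by move=> h i hi; rewrite !coefMn h. Qed.
Lemma eqmM {K p q p' q'} : eqm K p q -> eqm K p' q' -> eqm K (p * p') (q * q').
Proof.
move=> h h' i hi; rewrite !coefM; apply: eq_bigr => j _.
have hj := leq_ord j.
rewrite h; last by apply: leq_ltn_trans hj hi.
rewrite h' //; exact: leq_ltn_trans (leq_subr _ _) hi.
Qed.
Lemma eqmX {K p q n} : eqm K p q -> eqm K (p ^+ n) (q ^+ n).
Proof.
move=> h; elim: n => [|n IH]; first exact: eqm_refl.
by rewrite !exprS; apply: eqmM.
Qed.
Lemma eqm_sum K (I : finType) (F G : I -> {poly rat}) :
  (forall i, eqm K (F i) (G i)) -> eqm K (\sum_i F i) (\sum_i G i).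
Proof. by move=> h j hj; rewrite !coef_sum; apply: eq_bigr => i _; rewrite h. Qed.
Lemma eqm_deriv {K p q} : eqm K.+1 p q -> eqm K p^`() q^`().
Proof. by move=> h i hi; rewrite !coef_deriv h. Qed.
Lemma eqmMn2 {K p q} : eqm K (p *+ 2) (q *+ 2) -> eqm K p q.
Proof.
move=> h i hi; have := h i hi; rewrite !coefMn.
move=> e; apply/eqP; rewrite -subr_eq0.
by have := eqxx ((p`_i - q`_i) *+ 2); rewrite {2}mulrnBl e subrr mulrn_eq0.
Qed.

Lemma eqm_cancel {K a b} : eqm K (a * b) 0 -> b`_0 != 0 -> eqm K a 0.
Proof.
move=> h hb.
suff H : forall i, (i < K)%N -> forall j, (j <= i)%N -> a`_j = 0.
  by move=> i hi; rewrite coef0; apply: (H i hi).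
elim=> [|i IH] hi j hj.
  move: hj; rewrite leqn0 => /eqP ->.
  have := h 0%N hi; rewrite coefM big_ord1 coef0 subnn => /eqP.
  by rewrite mulf_eq0 (negbTE hb) orbF => /eqP.
case: (ltnP i j) => hij; last by apply: IH => //; apply: ltnW.
have -> : j = i.+1 by apply/eqP; rewrite eqn_leq hj hij.
have := h i.+1 hi; rewrite coefM big_ord_recr /= subnn coef0.
rewrite big1 ?add0r.
  by move=> /eqP; rewrite mulf_eq0 (negbTE hb) orbF => /eqP.
move=> k _; rewrite IH ?mul0r //; first exact: ltnW.
by have := ltn_ord k.
Qed.

Lemma eqm_vanish (p : {poly rat}) n : p`_0 = 0 -> eqm n (p ^+ n) 0.
Proof.
move=> h0; elim: n => [|n IH] i hi //.
rewrite exprS coefM coef0 big1 // => j _.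
case: (posnP j) => [-> | hj]; first by rewrite h0 mul0r.
rewrite IH ?coef0 ?mulr0 //; have := leq_ord j; lia.
Qed.

Lemma eqm_mul0 {K a b} : eqm K a 0 -> eqm K (b * a) 0.
Proof. by move=> h; rewrite -(mulr0 b); apply: eqmM. Qed.

Fixpoint vit (k : nat) : {poly rat} := if k is k'.+1 then 'X + vit k' * vit k' else 0.

Lemma vit0 k : (vit k)`_0 = 0.
Proof.
elim: k => [|k IH] /=; first by rewrite coef0.
by rewrite coefD coefX coefM big_ord1 IH mul0r addr0.
Qed.

Lemma sq_step {K a b} : eqm K a b -> a`_0 = 0 -> b`_0 = 0 ->
  forall i, (i <= K)%N -> (a * a)`_i = (b * b)`_i.
Proof.
move=> h a0 b0 i hi; rewrite !coefM; apply: eq_bigr => j _.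
have hj := leq_ord j.
case: (posnP j) => [-> | hj0]; first by rewrite a0 b0 !mul0r.
case: (posnP (i - j)) => [-> | hij]; first by rewrite a0 b0 !mulr0.
rewrite !h //; lia.
Qed.

Lemma vit_step k : eqm k.+1 (vit k.+1) (vit k).
Proof.
elim: k => [|k IH] i hi.
  by move: hi; rewrite ltnS leqn0 => /eqP ->; rewrite !vit0.
have -> : vit k.+2 = 'X + vit k.+1 * vit k.+1 by [].
have E : vit k.+1 = 'X + vit k * vit k by [].
rewrite [in RHS]E !coefD; congr (_ + _).
rewrite ltnS in hi; exact: (sq_step IH (vit0 _) (vit0 _) _ hi).
Qed.

Lemma v_prop M : eqm M (vit M) ('X + vit M * vit M).
Proof. exact: eqm_sym (eqm_le (leqnSn M) (vit_step M)). Qed.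

Lemma sum_pairs (R : nmodType) (f : nat -> R) m :
  \sum_(i < m.*2) f i = \sum_(k < m) (f k.*2 + f k.*2.+1).
Proof.
elim: m => [|m IH]; first by rewrite !big_ord0.
by rewrite doubleS !big_ord_recr /= IH addrA.
Qed.

Lemma sum_widen (R : nmodType) (f : nat -> R) n m : (n <= m)%N ->
  (forall i, (n < i)%N -> f i = 0) -> \sum_(i < n.+1) f i = \sum_(i < m.+1) f i.
Proof.
move=> hnm hf; elim: m hnm => [|m IH] hnm.
  by move: hnm; rewrite leqn0 => /eqP ->.
case: (leqP n m) => h.
  by rewrite [RHS]big_ord_recr /= (hf m.+1) ?addr0 ?IH // ltnS.
by have -> : n = m.+1 by apply/eqP; rewrite eqn_leq hnm h.
Qed.

Lemma even_binom (R : comPzRingType) (x : R) n :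
  (1 + x) ^+ n + (1 - x) ^+ n = (\sum_(k < n.+1) x ^+ (k.*2) *+ 'C(n, k.*2)) *+ 2.
Proof.
rewrite [1 + x]addrC [1 - x]addrC !exprD1n -big_split /=.
pose f i := (x ^+ i + (- x) ^+ i) *+ 'C(n, i).
have -> : \sum_(i < n.+1) (x ^+ i *+ 'C(n, i) + (- x) ^+ i *+ 'C(n, i)) =
          \sum_(i < n.+1) f i by apply: eq_bigr => i _; rewrite /f mulrnDl.
rewrite (@sum_widen _ f n n.*2.+1); last 2 first.
- lia.
- by move=> i hi; rewrite /f bin_small // mulr0n.
have -> : n.*2.+2 = n.+1.*2 by rewrite doubleS.
rewrite sum_pairs -sumrMnl; apply: eq_bigr => k _.
have e1 : (- x) ^+ k.*2 = x ^+ k.*2 by rewrite -mul2n !exprM sqrrN.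
have e2 : (- x) ^+ k.*2.+1 = - x ^+ k.*2.+1 by rewrite exprS e1 mulNr -exprS.
by rewrite /f e1 e2 subrr mul0rn addr0 -mulr2n mulrnAC.
Qed.

Lemma binc1 j : (0 < j)%N -> 'C(j.*2, j) = ('C(j.*2.-1, j) * 2)%N.
Proof.
case: j => [//|j] _.
rewrite doubleS /= binS.
have -> : 'C(j.*2.+1, j) = 'C(j.*2.+1, j.+1).
  by rewrite -bin_sub; [congr 'C(_, _); lia | lia].
lia.
Qed.

Lemma binc2 i : (i.+1 * 'C(i.+1.*2, i.+1) = (i.*2.+1 * 2) * 'C(i.*2, i))%N.
Proof.
have h1 := mul_bin_diag i.+1.*2 i.
have h2 := mul_bin_diag i.*2.+1 i.
have e : 'C(i.*2.+1, i.+1) = 'C(i.*2.+1, i).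
  by rewrite -bin_sub; [congr 'C(_, _); lia | lia].
rewrite doubleS /= in h1; rewrite /= e in h2.
rewrite doubleS; lia.
Qed.

Fact vser_key : unit. Proof. exact: tt. Qed.
Definition vser (d : nat) := locked_with vser_key (vit d.+2).
Lemma vserE d : vser d = vit d.+2. Proof. by rewrite /vser unlock. Qed.
Lemma vser_prop d : eqm d.+2 (vser d) ('X + vser d * vser d).
Proof. rewrite vserE; exact: v_prop. Qed.
Lemma vser0 d : (vser d)`_0 = 0.
Proof. rewrite vserE; exact: vit0. Qed.

Lemma natrMn' (m n : nat) : (m%:R *+ n : rat) = (m * n)%:R.
Proof. by rewrite natrM mulr_natr. Qed.

Section Main.
Variable d : nat.
Let v := vser d.
Let u : {poly rat} := 1 - v.
Let s : {poly rat} := 1 - v *+ 2.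

Let hv : eqm d.+2 v ('X + v * v) := vser_prop d.
Let hv0 : v`_0 = 0 := vser0 d.

Lemma hA : eqm d.+2 (v - v * v) 'X.
Proof.
have h1 := eqmB hv (@eqm_refl _ (v * v)).
refine (eqm_trans h1 _).
by apply: eqm_eq; rewrite addrK.
Qed.

Lemma hUV : eqm d.+2 'X (u * v).
Proof.
apply: eqm_sym; apply: eqm_trans hA; apply: eqm_eq; rewrite /u; ring.
Qed.

Lemma hB : eqm d.+2 (s * s) (1 - 'X *+ 4).
Proof.
have -> : s * s = 1 - (v - v * v) *+ 4 by rewrite /s; ring.
exact: eqmB eqm_refl (eqmMn hA).
Qed.

Lemma hC : eqm d.+1 (s * v^`()) 1.
Proof.
have hd := eqm_deriv hv.
rewrite derivD derivX derivM in hd.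
have -> : s * v^`() = v^`() - (v^`() * v + v * v^`()) by rewrite /s; ring.
have h1 := eqmB hd (@eqm_refl _ (v^`() * v + v * v^`())).
refine (eqm_trans h1 _).
by apply: eqm_eq; rewrite addrK.
Qed.

Lemma hD : eqm d.+2 (pdelta d) (u ^+ d.+1 + v ^+ d.+1).
Proof.
rewrite /pdelta.
set S := \sum_(k < d.+2) _.
have h1 : eqm d.+2 S (\sum_(k < d.+2) s ^+ (k.*2) *+ 'C(d.+1, k.*2)).
  apply: eqm_sum => k.
  rewrite !scaler_nat -mul2n exprM expr2.
  exact: eqmMn (eqmX (eqm_sym hB)).
have h2 : (\sum_(k < d.+2) s ^+ (k.*2) *+ 'C(d.+1, k.*2)) *+ 2 =
          (u ^+ d.+1 + v ^+ d.+1) *+ 2 ^ d *+ 2.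
  rewrite -even_binom.
  have -> : 1 + s = u *+ 2 by rewrite /u /s; ring.
  have -> : 1 - s = v *+ 2 by rewrite /s; ring.
  by rewrite !exprMn_n -mulrnDl -mulrnA mulnC -expnS.
have h3 : eqm d.+2 S ((u ^+ d.+1 + v ^+ d.+1) *+ 2 ^ d).
  refine (eqm_trans h1 _); apply: eqmMn2; apply: eqm_eq; exact: h2.
refine (eqm_trans (eqmZ h3) _); apply: eqm_eq.
rewrite -scaler_nat scalerA natrX mulVf ?scale1r //.
by rewrite expf_neq0.
Qed.

Let w : {poly rat} := \poly_(j < d.+2) ('C(j.*2, j))%:R.

Lemma hE1 : eqm d.+1 ((1 - 'X *+ 4) * w^`()) (w *+ 2).
Proof.
move=> i hi.
rewrite mulrBl mul1r mulrnAl coefB coefMn coefXM !coef_deriv coefMn !coef_poly.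
case: i hi => [|i] hi /=.
  by rewrite mul0rn subr0 !natrMn'.
rewrite ifT; last by lia.
rewrite ifT; last by lia.
rewrite !natrMn'; apply/eqP; rewrite subr_eq -natrD eqr_nat.
have := binc2 i.+1; rewrite !doubleS; lia.
Qed.

Lemma hE : eqm d.+2 (w * s) 1.
Proof.
set z := w * s.
have ds : s^`() = - (v^`() *+ 2) by rewrite /s derivB derivMn -polyC1 derivC sub0r.
have hz : eqm d.+1 (z^`() * (s * s)) 0.
  have e1 : eqm d.+1 ((s * s) * w^`()) (w *+ 2).
    exact: eqm_trans (eqmM (eqm_le (leqnSn _) hB) eqm_refl) hE1.
  have e2 := eqmB (eqmM e1 (@eqm_refl _ s)) (eqmMn (n := 2) (eqmM (@eqm_refl _ (w * s)) hC)).
  refine (eqm_trans (eqm_eq _) (eqm_trans e2 (eqm_eq _))).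
    by rewrite /z derivM ds; ring.
  by ring.
have s0 : (s * s)`_0 != 0.
  by rewrite (hB 0%N) // coefB coef1 coefMn coefX.
have hz' := eqm_cancel hz s0.
move=> i; case: i => [|i] hi.
  by rewrite /z coefM big_ord1 coef1 /w coef_poly /s coefB coef1 coefMn hv0 /= mul0rn subr0 mulr1.
have := hz' i hi; rewrite coef_deriv coef0 coef1 /= => /eqP.
by rewrite mulrn_eq0 /= => /eqP.
Qed.

Let Wc : {poly rat} := \poly_(j < d.+2) (if j == 0%N then 0 else ('C(j.*2.-1, j))%:R).

Lemma hF1 : eqm d.+2 (Wc *+ 2 + 1) w.
Proof.
move=> j hj; rewrite coefD coefMn coef1 !coef_poly hj.
case: j hj => [|j] hj /=; first by rewrite mul0rn add0r.
by rewrite addr0 natrMn' binc1.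
Qed.

Lemma hF2 : eqm d.+2 (s * Wc) v.
Proof.
apply: eqmMn2.
have e := eqmM (@eqm_refl _ s) hF1.
have e' := eqm_trans e (eqm_trans (eqm_eq (mulrC s w)) hE).
refine (eqm_trans (eqm_eq _) (eqm_trans (eqmB e' (@eqm_refl _ s)) (eqm_eq _))).
  by ring.
by rewrite /s; ring.
Qed.

Lemma hF3 : eqm d.+1 ('X * (s * (pdelta d)^`())) ((u * v) * (v ^+ d - u ^+ d) *+ d.+1).
Proof.
have du : u^`() = - v^`() by rewrite /u derivB -polyC1 derivC sub0r.
have e1 : eqm d.+1 (s * (pdelta d)^`()) ((s * v^`()) * (v ^+ d - u ^+ d) *+ d.+1).
  refine (eqm_trans (eqmM (@eqm_refl _ s) (eqm_deriv hD)) (eqm_eq _)).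
  rewrite derivD !deriv_exp du /=; ring.
have e2 : eqm d.+1 (s * (pdelta d)^`()) ((v ^+ d - u ^+ d) *+ d.+1).
  refine (eqm_trans e1 (eqm_trans (eqmMn (eqmM hC eqm_refl)) (eqm_eq _))).
  by rewrite mul1r.
refine (eqm_trans (eqmM (eqm_le (leqnSn _) hUV) e2) (eqm_eq _)).
by rewrite mulrnAr.
Qed.

Let Fc := pdelta d * Wc *+ d.+1 + 'X * (pdelta d)^`().

Lemma hF4 : eqm d.+1 (s * Fc) (v ^+ d.+1 *+ d.+1).
Proof.
have -> : s * Fc = ((s * Wc) * pdelta d) *+ d.+1 + 'X * (s * (pdelta d)^`()).
  by rewrite /Fc; ring.
refine (eqm_trans (eqmD (eqmMn (eqmM (eqm_le (leqnSn _) hF2) (eqm_le (leqnSn _) hD))) hF3) (eqm_eq _)).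
rewrite !exprS.
move: (u ^+ d) (v ^+ d) => A B.
rewrite /u; ring.
Qed.

Lemma hF5 : eqm d.+1 Fc 0.
Proof.
have e0 := eqm_vanish v d.+1 hv0.
refine (eqm_trans (eqm_eq (esym (mulr1 Fc))) _).
refine (eqm_trans (eqmM (@eqm_refl _ Fc) (eqm_sym (eqm_le (leqnSn _) hE))) _).
refine (eqm_trans (eqm_eq (_ : _ = (s * Fc) * w)) _); first by ring.
refine (eqm_trans (eqmM hF4 (@eqm_refl _ w)) _).
refine (eqm_trans (eqm_eq (_ : _ = (v ^+ d.+1 * w) *+ d.+1)) _); first by ring.
refine (eqm_trans (eqmMn (eqmM e0 (@eqm_refl _ w))) (eqm_eq _)).
by rewrite mul0r mul0rn.
Qed.

End Main.

Lemma alg_main d r : (1 <= r)%N -> (r <= d)%N ->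
  r%:R / (d.+1)%:R * acoef d r +
  \sum_(i < r) ('C((r - i).*2.-1, r - i))%:R * acoef d i = 0.
Proof.
move=> hr1 hrd.
have := hF5 d r; rewrite ltnS => /(_ hrd).
rewrite coefD coefMn coefXM coefM coef_deriv coef0.
case: r hr1 hrd => [//|r] _ hrd /=.
rewrite big_ord_recr /= subnn coef_poly /= mulr0 addr0.
set T := \sum_(i < r.+1) _.
have eT : T = \sum_(i < r.+1) ('C((r.+1 - i).*2.-1, r.+1 - i))%:R * acoef d i.
  apply: eq_bigr => i _; rewrite coef_poly mulrC /acoef.
  have hi := ltn_ord i.
  rewrite ifT; last by lia.
  by rewrite ifF //; apply/eqP; lia.
rewrite -eT => h.
have nz : ((d.+1)%:R : rat) != 0 by rewrite pnatr_eq0.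
have e : (d.+1)%:R * ((r.+1)%:R / (d.+1)%:R * acoef d r.+1 + T) =
         T *+ d.+1 + (pdelta d)`_r.+1 *+ r.+1.
  rewrite mulrDr mulrA mulrCA mulfV // mulr1 addrC /acoef.
  by rewrite (mulr_natl T d.+1) (mulr_natl ((pdelta d)`_r.+1) r.+1).
by move: e; rewrite h => /eqP; rewrite mulf_eq0 (negbTE nz) /= => /eqP.
Qed.

Fixpoint eo (s : seq nat) : nat * nat :=
  if s is x :: s' then ((x + (eo s').2)%N, (eo s').1) else (0%N, 0%N).

Lemma eo_sum s : sumn s = ((eo s).1 + (eo s).2)%N.
Proof. elim: s => [//|x s IH] /=; rewrite IH; lia. Qed.

Lemma eo_big s :
  (\sum_(i < size s) (if ~~ odd i then (nth 0%N s i)%:Z else 0) = ((eo s).1)%:Z) /\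
  (\sum_(i < size s) (if odd i then (nth 0%N s i)%:Z else 0) = ((eo s).2)%:Z).
Proof.
elim: s => [|x s [IH1 IH2]] /=; first by rewrite !big_ord0.
rewrite !big_ord_recl /= !add0r.
split.
  rewrite PoszD -IH2; congr (_ + _); apply: eq_bigr => i _.
  by rewrite add0n negbK.
by rewrite -IH1; apply: eq_bigr => i _; rewrite add0n.
Qed.

Lemma alt_rec x s j : alt_partial (x :: s) j.+1 = x%:Z - alt_partial s j.
Proof.
rewrite /alt_partial big_ord_recl /= expr0 mul1r; congr (_ + _).
rewrite -sumrN; apply: eq_bigr => i _.
by rewrite /= exprS mulN1r mulNr.
Qed.

Lemma alt_bound s j : - ((eo s).2)%:Z <= alt_partial s j <= ((eo s).1)%:Z.
Proof.
elim: s j => [|x s IH] j.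
  rewrite /alt_partial big1 ?oppr0 ?lexx // => i _.
  by rewrite nth_nil mulr0.
case: j => [|j].
  by rewrite /alt_partial big_ord0 /= oppr_le0 !le0z_nat.
rewrite alt_rec /=; have := IH j; lia.
Qed.

Definition dv (m : nat) (s : seq nat) : bool :=
  [&& all (fun a => 0 < a)%N s, sumn s == m,
      ((eo s).1 <= (eo s).2.+1)%N & ((eo s).2 <= (eo s).1.+1)%N].

Lemma dev_equiv m delta s : (m <= delta.*2)%N -> is_dev_set m delta s = dv m s.
Proof.
move=> hm; rewrite /is_dev_set /dv.
have [h1 h2] := eo_big s.
rewrite big_mkcond /= h1 big_mkcond /= h2.
case: (all _ s) => //=.
case hs: (sumn s == m) => //=.
move/eqP: hs; rewrite eo_sum => hs.
have habs : (`|((eo s).1)%:Z - ((eo s).2)%:Z| <= 1) =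
            ((eo s).1 <= (eo s).2.+1)%N && ((eo s).2 <= (eo s).1.+1)%N.
  rewrite ler_norml; apply/idP/idP.
    by move=> /andP [a b]; apply/andP; split; lia.
  by move=> /andP [a b]; apply/andP; split; lia.
rewrite habs.
case a: ((eo s).1 <= (eo s).2.+1)%N; case b: ((eo s).2 <= (eo s).1.+1)%N => //=.
apply/forallP => j; rewrite ler_norml.
have := alt_bound s j.+1; lia.
Qed.

Local Close Scope ring_scope.

Definition cntS (M k : nat) (P : seq nat -> bool) : nat :=
  \sum_(t : k.-tuple 'I_M) (P (map val t) : nat).

Lemma card_cntS M k P : #|[set t : k.-tuple 'I_M | P (map val t)]| = cntS M k P.
Proof.
rewrite -sum1_card /cntS big_mkcond /=; apply: eq_bigr => t _.
by rewrite inE; case: (P _).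
Qed.

Lemma cntS_ext M k P Q : (forall s, P s = Q s) -> cntS M k P = cntS M k Q.
Proof. by move=> h; apply: eq_bigr => t _; rewrite h. Qed.

Lemma cntS_cons M k P :
  cntS M k.+1 P = \sum_(x : 'I_M) cntS M k (fun s => P (val x :: s)).
Proof.
rewrite /cntS.
rewrite (reindex (fun p : 'I_M * k.-tuple 'I_M => [tuple of p.1 :: p.2])) /=.
  rewrite -(pair_big xpredT xpredT (fun x (t : k.-tuple 'I_M) => (P (val x :: map val t) : nat))) /=.
  by [].
exists (fun t : k.+1.-tuple 'I_M => (thead t, [tuple of behead t])).
  by move=> [x t] _ /=; congr pair; apply: val_inj.
move=> t _; apply: val_inj => /=.
by case: t => [[|x s] hs].
Qed.

Lemma cntS0 M P : cntS M 0 P = P [::].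
Proof.
rewrite /cntS (eq_bigr (fun _ => (P [::] : nat))) => [|t _]; last by rewrite tuple0.
by rewrite sum_nat_const card_tuple expn0 mul1n.
Qed.

Lemma cntS_and M k c Q : cntS M k (fun s => c && Q s) = if c then cntS M k Q else 0%N.
Proof. by case: c => //; rewrite /cntS big1. Qed.

Lemma cntS_or M k P Q : (forall s, ~~ (P s && Q s)) ->
  cntS M k (fun s => P s || Q s) = (cntS M k P + cntS M k Q)%N.
Proof.
move=> h; rewrite /cntS -big_split /=; apply: eq_bigr => t _.
by have := h (map val t); case: (P _); case: (Q _).
Qed.

Definition ab a b (s : seq nat) : bool :=
  [&& all (fun x => 0 < x)%N s, (eo s).1 == a & (eo s).2 == b].

Lemma ab_cons a b x s : ab a b (x :: s) = ((0 < x) && (x <= a))%N && ab b (a - x) s.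
Proof.
rewrite /ab /=; case: (0 < x)%N => //=; case: (all _ s); rewrite /= ?andbF //.
move: (eo s) => [E O] /=.
apply/idP/idP.
  by move=> /andP [/eqP h1 /eqP h2]; apply/andP; split; [lia | apply/andP; split; apply/eqP; lia].
move=> /andP [h1 /andP [/eqP h2 /eqP h3]]; by apply/andP; split; apply/eqP; lia.
Qed.

Definition cnt M K a b := (\sum_(k < K) cntS M k (ab a b))%N.

Lemma cnt_rec M K a b : cnt M K.+1 a b =
  (((a == 0) && (b == 0))%N : nat) +
  \sum_(x : 'I_M) (if ((0 < x) && (x <= a))%N then cnt M K b (a - x) else 0%N).
Proof.
rewrite /cnt big_ord_recl cntS0.
have -> : ab a b [::] = (a == 0) && (b == 0) by rewrite /ab /= !(eq_sym 0%N).
congr addn.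
rewrite (eq_bigr (fun k : 'I_K => \sum_(x : 'I_M)
     (if ((0 < x) && (x <= a))%N then cntS M k (ab b (a - x)) else 0%N))); last first.
  move=> k _; rewrite cntS_cons; apply: eq_bigr => x _.
  by rewrite -cntS_and; apply: cntS_ext => s; rewrite ab_cons.
rewrite exchange_big /=; apply: eq_bigr => x _.
by case: (_ && _) => //; rewrite big1.
Qed.

Definition G a b : nat := if a == 0%N then ((b == 0%N) : nat) else 'C(a + b - 1, b).

Lemma hockey c a : (\sum_(y < a.+1) 'C(c + y, y))%N = 'C(c + a.+1, a).
Proof.
elim: a => [|a IH]; first by rewrite big_ord1 !bin0.
rewrite big_ord_recr /= IH.
have -> : (c + a.+2 = (c + a.+1).+1)%N by lia.
by rewrite binS addnC.
Qed.

Lemma sumG b a : (\sum_(y < a.+1) G b y)%N = G a.+1 b.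
Proof.
case: b => [|c].
  rewrite big_ord_recl /G /= big1 ?bin0 // => i _.
rewrite /G /=.
rewrite (eq_bigr (fun y : 'I_a.+1 => 'C(c + y, y))) => [|y _]; last first.
  by congr 'C(_, _); lia.
rewrite hockey -bin_sub; last by lia.
congr 'C(_, _); lia.
Qed.

Lemma cnt_G M K a b : (a + b < M)%N -> (a + b < K)%N -> cnt M K a b = G a b.
Proof.
elim: K a b => [//|K IH] a b hM hK.
rewrite cnt_rec.
rewrite (eq_bigr (fun x : 'I_M =>
   if ((0 < x) && (x <= a))%N then G b (a - x) else 0%N)); last first.
  move=> x _; case: ifP => // /andP [h1 h2]; apply: IH; lia.
case: a hM hK => [|a] hM hK.
  rewrite big1 ?addn0 // => x _.
  by case: ifP => // /andP [h1 h2]; lia.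
rewrite /= add0n.
clear IH; case: M hM => [//|M] hM.
rewrite -(@sum_widen _ (fun x => if ((0 < x) && (x <= a.+1))%N then G b (a.+1 - x) else 0%N)
             a.+1 M); last 2 first.
- lia.
- by move=> i hi; case: ifP => // /andP [h1 h2]; lia.
rewrite big_ord_recl /= add0r -sumG.
have -> : (\sum_(y < a.+1) G b y = \sum_(0 <= y < a.+1) G b y)%N by rewrite big_mkord.
rewrite big_rev_mkord subn0.
apply: eq_bigr => i _.
have hi := ltn_ord i.
rewrite ifT /bump /=; last by lia.
congr G; lia.
Qed.

Lemma ab_even j s : dv (j.*2) s = ab j j s.
Proof.
rewrite /dv /ab eo_sum; case: (all _ s) => //=.
move: (eo s) => [E O] /=.
apply/idP/idP.
  by move=> /andP [/eqP h1 /andP [h2 h3]]; apply/andP; split; apply/eqP; lia.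
by move=> /andP [/eqP h1 /eqP h2]; apply/andP; split; [apply/eqP; lia | apply/andP; split; lia].
Qed.

Lemma ab_odd j s : (0 < j)%N -> dv (j.*2.-1) s = ab j j.-1 s || ab j.-1 j s.
Proof.
case: j => [//|j] _; rewrite /dv /ab eo_sum doubleS /=; case: (all _ s) => //=.
move: (eo s) => [E O] /=.
apply/idP/idP.
  move=> /andP [/eqP h1 /andP [h2 h3]].
  case: (leqP O E) => h.
    by apply/orP; left; apply/andP; split; apply/eqP; lia.
  by apply/orP; right; apply/andP; split; apply/eqP; lia.
move=> /orP [] /andP [/eqP h1 /eqP h2]; rewrite h1 h2; apply/andP; split.
- by apply/eqP; lia.
- by apply/andP; split; lia.
- by apply/eqP; lia.
- by apply/andP; split; lia.
Qed.

Lemma ab_disj j s : (0 < j)%N -> ~~ (ab j j.-1 s && ab j.-1 j s).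
Proof.
move=> hj; rewrite /ab; case: (all _ s) => //=.
move: (eo s) => [E O] /=.
apply/negP => /andP [/andP [/eqP h1 /eqP h2] /andP [/eqP h3 /eqP h4]]; lia.
Qed.

Lemma zeta_even j delta : (0 < j)%N -> (j <= delta)%N -> zeta (j.*2) delta = 'C(j.*2.-1, j).
Proof.
move=> hj hjd; rewrite /zeta.
rewrite (eq_bigr (fun k : 'I_(j.*2.+1) => cntS j.*2.+1 k (ab j j))) => [|k _]; last first.
  rewrite card_cntS; apply: cntS_ext => s; rewrite dev_equiv ?ab_even //; lia.
rewrite -/(cnt _ _ j j) cnt_G; [| lia | lia].
rewrite /G ifF; last by apply/eqP; lia.
congr 'C(_, _); lia.
Qed.

Lemma zeta_odd j delta : (0 < j)%N -> (j <= delta)%N -> zeta (j.*2.-1) delta = 'C(j.*2.-1, j).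
Proof.
move=> hj hjd; rewrite /zeta.
rewrite (eq_bigr (fun k : 'I_(j.*2.-1.+1) =>
     (cntS j.*2.-1.+1 k (ab j j.-1) + cntS j.*2.-1.+1 k (ab j.-1 j))%N)) => [|k _]; last first.
  rewrite card_cntS -cntS_or; last by move=> s; apply: ab_disj.
  apply: cntS_ext => s; rewrite dev_equiv ?ab_odd //; lia.
rewrite big_split /= -/(cnt _ _ j j.-1) -/(cnt _ _ j.-1 j) !cnt_G; try lia.
case: j hj hjd => [//|[|j]] _ hjd; first by [].
rewrite /G /=.
have -> : (j.+2 + j.+1 - 1 = j.*2.+2)%N by lia.
have -> : (j.+1 + j.+2 - 1 = j.*2.+2)%N by lia.
have -> : (j.+1.*2.+1 = j.*2.+3)%N by lia.
by rewrite binS addnC.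
Qed.

Local Open Scope ring_scope.

Theorem corollary2 (delta r : nat) (hdelta : (1 <= delta)%N)
    (hr1 : (1 <= r)%N) (hr2 : (r <= delta)%N) :
  (let omega j : rat :=
     if j == 0%N then r%:R / (delta.+1)%:R else (zeta (j.*2) delta)%:R in
   \sum_(i < r.+1) omega (r - i)%N * acoef delta i = 0)
  /\
  (let omega j : rat :=
     if j == 0%N then r%:R / (delta.+1)%:R else (zeta (j.*2.-1) delta)%:R in
   \sum_(i < r.+1) omega (r - i)%N * acoef delta i = 0).
Proof.
have key : forall (z : nat -> nat),
    (forall j, (0 < j)%N -> (j <= delta)%N -> z j = 'C(j.*2.-1, j)) ->
    \sum_(i < r.+1) (if (r - i)%N == 0%N then r%:R / (delta.+1)%:R
                     else ((z (r - i)%N)%:R : rat)) * acoef delta i = 0.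
  move=> z hz; rewrite big_ord_recr /= subnn eqxx addrC.
  rewrite (eq_bigr (fun i : 'I_r => ('C((r - i).*2.-1, r - i))%:R * acoef delta i)).
    exact: alg_main.
  move=> i _; have hi := ltn_ord i.
  rewrite ifF; last by apply/eqP; lia.
  rewrite hz //; lia.
split.
- exact: (key (fun j => zeta (j.*2) delta) (fun j a b => zeta_even j delta a b)).
- exact: (key (fun j => zeta (j.*2.-1) delta) (fun j a b => zeta_odd j delta a b)).
Qed.
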